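(* A connected split graph is connected-domishold if and only if it is total domishold.
   Context: A graph is split if its vertex set can be partitioned into a clique and an independent set. A connected dominating set of a connected graph $G$ is a set $S\subseteq V(G)$ such that every vertex not in $S$ has a neighbor in $S$ and $G[S]$ is connected. A graph $G=(V,E)$ is connected-domishold if there exist $w:V\to\mathbb{R}_{\ge0}$ and $t\in\mathbb{R}_{\ge0}$ such that for all $S\subseteq V$, $\sum_{x\in S}w(x)\ge t$ iff $S$ is a connected dominating set. A total dominating set of $G$ is a set $S\subseteq V(G)$ such that every vertex of $G$ has a neighbor in $S$. $G$ is total domishold if there exist $w:V\to\mathbb{R}_{\ge0}$ and $t\in\mathbb{R}_{\ge0}$ such that for all $S\subseteq V$, $\sum_{x\in S}w(x)\ge t$ iff $S$ is a total dominating set of $G$. *)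

(* Defs.v *)
From mathcomp Require Import all_boot.
From Stdlib Require Import Reals.
Set Implicit Arguments. Unset Strict Implicit. Unset Printing Implicit Defensive.

Definition simple_graph (T : finType) (e : rel T) : Prop :=
  symmetric e /\ irreflexive e.

Definition induced_connected (T : finType) (e : rel T) (S : {set T}) : Prop :=
  forall x y, x \in S -> y \in S ->
    connect (fun u v => [&& u \in S, v \in S & e u v]) x y.

Definition connected_graph (T : finType) (e : rel T) : Prop :=
  0 < #|T| /\ induced_connected e [set: T].

Definition is_clique (T : finType) (e : rel T) (K : {set T}) : Prop :=
  forall x y, x \in K -> y \in K -> x != y -> e x y.

Definition is_independent (T : finType) (e : rel T) (I : {set T}) : Prop :=
  forall x y, x \in I -> y \in I -> ~~ e x y.

Definition split_graph (T : finType) (e : rel T) : Prop :=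
  exists K I : {set T}, [disjoint K & I] /\ K :|: I = [set: T] /\
    is_clique e K /\ is_independent e I.

Definition dominating (T : finType) (e : rel T) (S : {set T}) : Prop :=
  forall x, x \notin S -> exists2 y, y \in S & e x y.

Definition connected_dominating (T : finType) (e : rel T) (S : {set T}) : Prop :=
  dominating e S /\ induced_connected e S.

Definition total_dominating (T : finType) (e : rel T) (S : {set T}) : Prop :=
  forall x, exists2 y, y \in S & e x y.

Definition wsum (T : finType) (w : T -> R) (S : {set T}) : R :=
  List.fold_right Rplus 0%R (List.map w (enum S)).

Definition threshold_family (T : finType) (P : {set T} -> Prop) : Prop :=
  exists (w : T -> R) (t : R), (forall x, (0 <= w x)%R) /\ (0 <= t)%R /\
    forall S : {set T}, (t <= wsum w S)%R <-> P S.

Definition connected_domishold (T : finType) (e : rel T) : Prop :=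
  threshold_family (connected_dominating e).

Definition total_domishold (T : finType) (e : rel T) : Prop :=
  threshold_family (total_dominating e).

(* Main.v *)
Require Import Defs.
From HB Require Import structures.
From mathcomp Require Import all_boot.
From Stdlib Require Import Reals Lra.
Set Implicit Arguments. Unset Strict Implicit. Unset Printing Implicit Defensive.

HB.instance Definition _ := Monoid.isComLaw.Build R 0%R Rplus (fun a b c => esym (Rplus_assoc a b c)) Rplus_comm Rplus_0_l.

Section S.
Variable T : finType.

Lemma wsumE (w : T -> R) (S : {set T}) : wsum w S = \big[Rplus/0%R]_(x in S) w x.
Proof.
rewrite /wsum -big_enum; elim: (enum S) => [|a l IH] /=.
  by rewrite big_nil.
by rewrite big_cons IH.
Qed.

Lemma wsum_le (f g : T -> R) (S : {set T}) : (forall x, x \in S -> (f x <= g x)%R) ->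
  (wsum f S <= wsum g S)%R.
Proof.
move=> H; rewrite !wsumE; apply: (big_ind2 (fun a b => a <= b)%R) => //.
- lra.
- move=> *; lra.
Qed.

Lemma wsum_ge0 (f : T -> R) (S : {set T}) : (forall x, (0 <= f x)%R) -> (0 <= wsum f S)%R.
Proof.
move=> H; rewrite wsumE; apply: (big_ind (fun a => 0 <= a)%R) => //.
- lra.
- move=> *; lra.
Qed.

Lemma wsum_eq (f g : T -> R) (S : {set T}) : (forall x, x \in S -> f x = g x) ->
  wsum f S = wsum g S.
Proof. by move=> H; rewrite !wsumE; apply: eq_bigr. Qed.

Lemma wsum_one (f : T -> R) (S : {set T}) x : (forall x, (0 <= f x)%R) -> x \in S ->
  (f x <= wsum f S)%R.
Proof.
move=> H Hx; rewrite wsumE (bigD1 x) //=.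
have : (0 <= \big[Rplus/0%R]_(i in S | i != x) f i)%R.
  apply: (big_ind (fun a => 0 <= a)%R) => //; [lra| move=> *; lra].
lra.
Qed.

Lemma wsum_two (f : T -> R) (S : {set T}) x y : (forall x, (0 <= f x)%R) -> x \in S ->
  y \in S -> x != y -> (f x + f y <= wsum f S)%R.
Proof.
move=> H Hx Hy Hxy; rewrite wsumE (bigD1 x) //= (bigD1 y) /=; last first.
  by rewrite Hy eq_sym Hxy.
have : (0 <= \big[Rplus/0%R]_(i | (i \in S) && (i != x) && (i != y)) f i)%R.
  apply: (big_ind (fun a => 0 <= a)%R) => //; [lra| move=> *; lra].
lra.
Qed.

Lemma wsum1 (f : T -> R) x : wsum f [set x] = f x.
Proof. by rewrite wsumE big_set1. Qed.

Lemma iterRc n c : iter n (Rplus c) 0%R = (INR n * c)%R.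
Proof. elim: n => [|n IH]; first (simpl; lra). rewrite iterS IH S_INR; lra. Qed.

Lemma wsum_addc (f : T -> R) c (S : {set T}) :
  wsum (fun x => f x + c)%R S = (wsum f S + INR #|S| * c)%R.
Proof. by rewrite !wsumE big_split /= big_const iterRc. Qed.
End S.

Section G.
Variables (T : finType) (e : rel T).
Hypothesis Hsg : simple_graph e.
Hypothesis Hn : 0 < #|T|.
Hypothesis Hsp : split_graph e.

Definition U := [set u | [forall v, (v != u) ==> e u v]].

Lemma esym x y : e x y = e y x.
Proof. by case: Hsg => Hs _; rewrite Hs. Qed.

Lemma star (S : {set T}) k : k \in S ->
  (forall x, x \in S -> connect (fun u v => [&& u \in S, v \in S & e u v]) k x) ->
  induced_connected e S.
Proof.
move=> Hk H x y Hx Hy.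
have Hsym : connect_sym (fun u v => [&& u \in S, v \in S & e u v]).
  apply: sym_connect_sym => u v /=; rewrite esym; by case: (u \in S); case: (v \in S).
apply: connect_trans (H y Hy); rewrite Hsym; exact: H.
Qed.

Lemma Unb u x : u \in U -> x != u -> e u x.
Proof. by rewrite inE => /forallP /(_ x) /implyP; apply. Qed.

Lemma TD_CD (S : {set T}) : total_dominating e S -> connected_dominating e S.
Proof.
move=> HT; split; first by move=> x _; exact: HT.
case: Hsp => K [I [Hdis [Hcov [HK HI]]]].
have KorI x : (x \in K) || (x \in I).
  by rewrite -in_setU Hcov in_setT.
have getK x : x \in I -> exists2 z, z \in S & z \in K.
  move=> HxI; case: (HT x) => z Hz Hxz; exists z => //.
  case/orP: (KorI z) => // HzI; by move: (HI x z HxI HzI); rewrite Hxz.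
have /card_gt0P [x0 _] := Hn.
have [k Hk HkK] : exists2 k, k \in S & k \in K.
  case: (HT x0) => y Hy _; case/orP: (KorI y) => Hy'.
    by exists y.
  exact: (getK y Hy').
have toK z : z \in S -> z \in K ->
   connect (fun u v => [&& u \in S, v \in S & e u v]) k z.
  move=> Hz HzK; case: (eqVneq k z) => [->|Hne]; first exact: connect0.
  apply: connect1; by rewrite /= Hk Hz HK.
apply: (star Hk) => x Hx; case/orP: (KorI x) => HxK; first exact: toK.
case: (HT x) => z Hz Hxz.
have HzK : z \in K.
  case/orP: (KorI z) => // HzI; by move: (HI x z HxK HzI); rewrite Hxz.
apply: connect_trans (toK z Hz HzK) _; apply: connect1.
by rewrite /= Hz Hx esym Hxz.
Qed.

Lemma U_CD (S : {set T}) u : u \in S -> u \in U -> connected_dominating e S.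
Proof.
move=> HuS HuU; split.
  move=> x Hx; exists u => //; rewrite esym; apply: Unb => //.
  by apply: contraNneq Hx => ->.
apply: (star HuS) => x Hx; case: (eqVneq u x) => [->|Hne]; first exact: connect0.
by apply: connect1; rewrite /= HuS Hx Unb // eq_sym.
Qed.

Lemma path_nb (S : {set T}) x y : induced_connected e S -> x \in S -> y \in S -> x != y ->
  exists2 z, z \in S & e x z.
Proof.
move=> HC Hx Hy Hne; move: (HC x y Hx Hy) => /connectP [p Hp Hl].
case: p Hp Hl => [|z p] /=.
  by move=> _ Hyx; move: Hne; rewrite Hyx eqxx.
by move=> /andP [/and3P [_ Hz Hxz] _] _; exists z.
Qed.

Lemma CD_TD (S : {set T}) : connected_dominating e S -> (forall u, u \in S -> u \notin U) ->
  total_dominating e S.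
Proof.
move=> [HD HC] HU x.
case: (boolP (x \in S)) => HxS; last exact: HD.
have := HU x HxS; rewrite inE negb_forall => /existsP [v].
rewrite negb_imply => /andP [Hvx Hxv].
case: (boolP (v \in S)) => HvS.
  by apply: (path_nb HC HxS HvS); rewrite eq_sym.
case: (HD v HvS) => y Hy Hvy.
apply: (path_nb HC HxS Hy); apply: contraNneq Hxv => Exy.
by rewrite esym Exy.
Qed.

Lemma U_TD (S : {set T}) u v : u \in S -> u \in U -> v \in S -> v != u -> total_dominating e S.
Proof.
move=> Hu HuU Hv Hvu x; case: (eqVneq x u) => [->|Hxu].
  by exists v => //; apply: Unb.
by exists u => //; rewrite esym; apply: Unb.
Qed.

Lemma not_TD1 u : ~ total_dominating e [set u].
Proof.
move=> H; case: (H u) => y; rewrite in_set1 => /eqP ->.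
by case: Hsg => _ Hi; rewrite Hi.
Qed.

End G.

Lemma seq_min (X : eqType) (l : seq X) (f : X -> R) : (forall x, 0 < f x)%R ->
  exists d, (0 < d)%R /\ forall x, x \in l -> (d <= f x)%R.
Proof.
move=> Hf; elim: l => [|a l [d [Hd H]]].
  by exists 1%R; split => //; lra.
exists (Rmin d (f a)); split; first by apply: Rmin_glb_lt => //.
move=> x; rewrite inE => /orP [/eqP ->|Hx]; first exact: Rmin_r.
apply: Rle_trans (Rmin_l _ _) (H x Hx).
Qed.

Lemma fin_min (X : finType) (f : X -> R) : (forall x, 0 < f x)%R ->
  exists d, (0 < d)%R /\ forall x, (d <= f x)%R.
Proof.
move=> Hf; have [d [Hd H]] := seq_min (enum X) Hf.
by exists d; split => // x; apply: H; rewrite mem_enum.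
Qed.

Theorem mainTheorem5 (T : finType) (e : rel T) :
  simple_graph e -> connected_graph e -> split_graph e ->
  (connected_domishold e <-> total_domishold e).
Proof.
move=> Hsg [Hn _] Hsp.
have /card_gt0P [x0 _] := Hn.
have notCD0 : ~ connected_dominating e (set0 : {set T}).
  by move=> [HD _]; case: (HD x0 (negbT (in_set0 _))) => y; rewrite in_set0.
split.
- move=> [w [t [Hw [Ht Hiff]]]].
  have Ht0 : (0 < t)%R.
    have := wsum_ge0 (set0 : {set T}) Hw.
    have : ~ (t <= wsum w set0)%R by move/Hiff.
    lra.
  pose f S := if Rlt_dec (wsum w S) t then (t - wsum w S)%R else t.
  have [d [Hd Hdf]] : exists d, (0 < d)%R /\ forall S, (d <= f S)%R.
    apply: fin_min => S; rewrite /f; case: Rlt_dec => H /=; lra.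
  have Hdt : (d <= t)%R.
    have := Hdf set0; have := wsum_ge0 (set0 : {set T}) Hw; rewrite /f.
    case: Rlt_dec => H /=; lra.
  have HnR : (1 <= INR #|T|)%R by apply: (le_INR 1); apply/leP.
  pose eps := (d / (2 * INR #|T|))%R.
  have Heps : (0 < eps /\ 2 * INR #|T| * eps = d)%R.
    rewrite /eps; split; first (apply: Rdiv_lt_0_compat; lra).
    field; lra.
  have Heps2 : (2 * eps <= d)%R by nra.
  pose w' x := if x \in U e then (t - eps)%R else (w x + eps)%R.
  have Hw' : forall x, (0 <= w' x)%R.
    by move=> x; rewrite /w'; case: (x \in U e); have := Hw x; lra.
  exists w', t.
  split; first exact: Hw'.
  split; first lra.
  move=> S.
  case: (pickP (fun u => (u \in S) && (u \in U e))) => [u /andP [HuS HuU]|HnoU].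
    case: (pickP (fun v => (v \in S) && (v != u))) => [v /andP [HvS Hvu]|Hnov].
      split=> _; first exact: (U_TD Hsg HuS HuU HvS Hvu).
      have := wsum_two Hw' HuS HvS; rewrite eq_sym => /(_ Hvu).
      rewrite /w' HuU; case: (v \in U e); have := Hw v; lra.
    have -> : S = [set u].
      apply/setP => x; rewrite in_set1; case: (eqVneq x u) => [->//|Hxu].
      by move: (Hnov x) => /=; rewrite Hxu andbT => ->.
    rewrite wsum1 /w' HuU; split; [lra | by move/not_TD1].
  have Hno : forall u, u \in S -> u \notin U e.
    by move=> u Hu; move: (HnoU u) => /=; rewrite Hu /= => ->.
  have -> : wsum w' S = wsum (fun x => w x + eps)%R S.
    by apply: wsum_eq => x Hx; rewrite /w' (negbTE (Hno x Hx)).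
  rewrite wsum_addc.
  have HS : (0 <= INR #|S| <= INR #|T|)%R.
    split; first exact: pos_INR.
    by apply: le_INR; apply/leP; apply: max_card.
  split => H.
    case: (Rle_dec t (wsum w S)) => H2.
      exact: (CD_TD Hsg (proj1 (Hiff S) H2) Hno).
    have := Hdf S; rewrite /f; case: Rlt_dec => H3 /=; nra.
  have := proj2 (Hiff S) (TD_CD Hsg Hn Hsp H); nra.
- move=> [w [t [Hw [Ht Hiff]]]].
  pose w' x := (w x + (if x \in U e then t else 0))%R.
  have Hw' : forall x, (0 <= w' x)%R.
    by move=> x; rewrite /w'; case: (x \in U e); have := Hw x; lra.
  exists w', t; split; first exact: Hw'.
  split; first lra.
  move=> S.
  case: (pickP (fun u => (u \in S) && (u \in U e))) => [u /andP [HuS HuU]|HnoU].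
    split=> _; first exact: (U_CD Hsg HuS HuU).
    have := wsum_one Hw' HuS; rewrite /w' HuU; have := Hw u; lra.
  have Hno : forall u, u \in S -> u \notin U e.
    by move=> u Hu; move: (HnoU u) => /=; rewrite Hu /= => ->.
  have -> : wsum w' S = wsum w S.
    by apply: wsum_eq => x Hx; rewrite /w' (negbTE (Hno x Hx)) Rplus_0_r.
  rewrite Hiff; split; first exact: TD_CD.
  by move=> H; exact: (CD_TD Hsg H Hno).
Qed.
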